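(* Fix $C\neq1$ and fix $\epsilon\in(0,1)$ and $\omega>0$ such that $\delta_0=\delta(C)-C\epsilon-\omega>0$ (note $\delta_2=\delta(C)-\log(1-\epsilon)+\omega>0$ automatically). There is a positive constant $N$ such that for all $n\ge N$, all $1\le i\le n$ and all integers $1\le r\le\epsilon n$, \[ \mathbb{P}(\#\mathcal{E}_i=r)\le\frac{T_re^{-r}}{C(r-1)!}e^{-\delta_0 r} \] and \[ \mathbb{P}(\#\mathcal{E}_i=r)\ge\frac{1}{C(1-\epsilon)}\frac{T_re^{-r}}{(r-1)!}e^{-\delta_2 r}e^{-2\epsilon+\frac{2\omega}{3}}. \]
   Context: Let $C>0$ be a constant and $(\alpha_n)_{n\ge1}$ a sequence of nonnegative reals with $\alpha_n\to0$. For each $n$, consider the complete graph $K_n$ on vertex set $\{1,\dots,n\}$; each edge $e$ of $K_n$ is independently open with probability $p_n(e)$ and closed otherwise, where $\frac{C-\alpha_n}{n}\le p_n(e)\le\frac{C+\alpha_n}{n}$ for every edge $e$. Let $G$ be the resulting random graph of open edges, with probability measure $\mathbb{P}$. For a vertex $i$, $\mathcal{E}_i$ denotes the open component of $G$ containing $i$ (the set of vertices joined to $i$ by a path of open edges, together with $i$ itself), and $\#\mathcal{E}_i$ its number of vertices. $\delta(C)=C-1-\log C$. $T_1=1$ and for $r\ge2$, $T_r$ is the number of labelled trees on $r$ vertices. *)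

(* Defs.v *)
From HB Require Import structures.
From mathcomp Require Import all_boot all_order all_algebra.
From mathcomp Require Import all_classical all_reals all_analysis.
Set Implicit Arguments. Unset Strict Implicit. Unset Printing Implicit Defensive.
Import Order.TTheory GRing.Theory Num.Theory.
Local Open Scope ring_scope.

(* Edges of the complete graph K_n on vertex set 'I_n (vertices 0..n-1):
   unordered pairs {x,y}, represented as ordered pairs (x,y) with x < y. *)
Definition edge (n : nat) : finType := {x : 'I_n * 'I_n | (x.1 < x.2)%N}.

Definition adj (n : nat) (w : {set edge n}) : rel 'I_n :=
  fun x y => [exists e in w,
    (((val e).1 == x) && ((val e).2 == y)) || (((val e).1 == y) && ((val e).2 == x))].

(* open component of vertex i (includes i itself, connect is reflexive) *)
Definition comp (n : nat) (w : {set edge n}) (i : 'I_n) : {set 'I_n} :=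
  [set j | connect (adj w) i j].

(* probability of the configuration w (w = set of open edges) when edge e is
   independently open with probability p e *)
Definition weight (R : realType) (n : nat) (p : edge n -> R) (w : {set edge n}) : R :=
  (\prod_(e in w) p e) * (\prod_(e in ~: w) (1 - p e)).

Definition prob_comp_size (R : realType) (n : nat) (p : edge n -> R) (i : 'I_n) (r : nat) : R :=
  \sum_(w : {set edge n} | #|comp w i| == r) weight p w.

(* a (spanning) tree on 'I_r: connected, and acyclic (every edge is a bridge,
   i.e. no edge lies on a cycle) *)
Definition is_tree (r : nat) (w : {set edge r}) : bool :=
  [forall x : 'I_r, forall y : 'I_r, connect (adj w) x y] &&
  [forall e in w, ~~ connect (adj (w :\ e)) (val e).1 (val e).2].

Definition T (r : nat) : nat := #|[set w : {set edge r} | is_tree w]|.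

Definition delta (R : realType) (C : R) : R := C - 1 - ln C.

(* Main.v *)
From Pilot Require Import Defs.
From HB Require Import structures.
From mathcomp Require Import all_boot all_order all_algebra.
From mathcomp Require Import all_classical all_reals all_analysis.
From mathcomp Require Import lra ring zify.
Import Order.TTheory GRing.Theory Num.Theory.
Import numFieldNormedType.Exports.

Module Aux.
Import Pilot.Defs.
From mathcomp Require Import fintype finset.
Set Implicit Arguments. Unset Strict Implicit. Unset Printing Implicit Defensive.

Lemma connect_ind' (T : finType) (e : rel T) (P : T -> Prop) x :
  P x -> (forall y z, P y -> e y z -> P z) -> forall y, connect e x y -> P y.
Proof.
move=> Px IH y /connectP [s]; elim: s x Px => [|z s IHs] x Px /=; first by move=> _ ->.
case/andP => exz ps ly; apply: (IHs z) => //; exact: IH exz.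
Qed.

Section Graph.
Variable n : nat.
Implicit Types (w t u : {set edge n}) (x y a b : 'I_n) (e : edge n).

Definition e1 e : 'I_n := (val e).1.
Definition e2 e : 'I_n := (val e).2.
Definition ends e x y := ((e1 e == x) && (e2 e == y)) || ((e1 e == y) && (e2 e == x)).

Lemma adjP w x y : reflect (exists2 e, e \in w & ends e x y) (adj w x y).
Proof. by apply: (iffP existsP) => [[e /andP[]]|[e ew he]]; [exists e|exists e; rewrite ew]. Qed.

Lemma ends_sym e x y : ends e x y = ends e y x.
Proof. by rewrite /ends orbC. Qed.

Lemma adj_sym w : symmetric (adj w).
Proof. by move=> x y; apply/adjP/adjP => -[e ew he]; exists e; rewrite // ends_sym. Qed.

Lemma connect_symw w x y : connect (adj w) x y = connect (adj w) y x.
Proof. exact/sym_connect_sym/adj_sym. Qed.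

Lemma adj_edge w e : e \in w -> adj w (e1 e) (e2 e).
Proof. by move=> ew; apply/adjP; exists e; rewrite // /ends !eqxx. Qed.

Lemma adj_subw w w' x y : w \subset w' -> adj w x y -> adj w' x y.
Proof. by move=> sw /adjP[e ew he]; apply/adjP; exists e; rewrite // (fintype.subsetP sw). Qed.

Lemma connect_subw w w' x y : w \subset w' -> connect (adj w) x y -> connect (adj w') x y.
Proof.
move=> sw; apply: connect_sub => a b hab; apply: connect1; exact: adj_subw hab.
Qed.

Lemma adjU1 e w x y : adj (e |: w) x y = ends e x y || adj w x y.
Proof.
apply/adjP/orP => [[f]|[he|/adjP[f fw hf]]].
- by rewrite in_setU1 => /orP[/eqP->|fw hf]; [left|right; apply/adjP; exists f].
- by exists e; rewrite ?setU11.
- by exists f; rewrite // in_setU1 fw orbT.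
Qed.

Lemma ends_edge e x y : ends e x y -> (x == e1 e) && (y == e2 e) || (x == e2 e) && (y == e1 e).
Proof. by rewrite /ends => /orP[] /andP[/eqP-> /eqP->]; rewrite !eqxx ?orbT. Qed.

Lemma connect_reroute w e x y : connect (adj (w :\ e)) (e1 e) (e2 e) ->
  connect (adj w) x y -> connect (adj (w :\ e)) x y.
Proof.
move=> c12; apply: connect_sub => a b /adjP[f fw hf].
case: (eqVneq f e) => [fe|fne].
  subst f; case/orP: (ends_edge hf) => /andP[/eqP-> /eqP->] //.
  by rewrite connect_symw.
by apply: connect1; apply/adjP; exists f; rewrite // !inE fne.
Qed.

Lemma comp_eq w x y : connect (adj w) x y -> comp w x = comp w y.
Proof.
move=> cxy; apply/finset.setP => z; rewrite !inE; apply/idP/idP => h.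
  by apply: connect_trans h; rewrite connect_symw.
exact: connect_trans h.
Qed.

Lemma mem_comp w x y : (y \in comp w x) = connect (adj w) x y.
Proof. by rewrite inE. Qed.


Lemma connectU1 w e x y :
  connect (adj (e |: w)) x y = [|| connect (adj w) x y,
    connect (adj w) x (e1 e) && connect (adj w) (e2 e) y |
    connect (adj w) x (e2 e) && connect (adj w) (e1 e) y].
Proof.
set c := connect (adj w).
apply/idP/idP.
  move: y; apply: connect_ind'; first by rewrite /c connect0.
  move=> y z Py; rewrite adjU1 => /orP[/ends_edge|ayz].
    case/orP=> /andP[/eqP Hy /eqP Hz]; subst y z; case/or3P: Py.
    - by move=> ->; rewrite /c connect0 !orbT.
    - by case/andP => -> _; rewrite /c connect0 !orbT.
    - by case/andP => -> _.
    - by move=> ->; rewrite /c connect0 !orbT.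
    - by case/andP => -> _.
    - by case/andP => -> _; rewrite /c connect0 !orbT.
  have cyz : c y z by apply: connect1.
  case/or3P: Py => [h|/andP[h1 h2]|/andP[h1 h2]]; apply/or3P.
  - by constructor 1; apply: connect_trans h cyz.
  - by constructor 2; rewrite h1; apply: connect_trans h2 cyz.
  - by constructor 3; rewrite h1; apply: connect_trans h2 cyz.
have sw : w \subset e |: w by apply/fintype.subsetP => f fw; rewrite in_setU1 fw orbT.
have c12 : connect (adj (e |: w)) (e1 e) (e2 e).
  by apply: connect1; apply: adj_edge; apply: setU11.
case/or3P => [h|/andP[h1 h2]|/andP[h1 h2]].
- exact: connect_subw h.
- apply: connect_trans (connect_subw sw h1) _.
  exact: connect_trans c12 (connect_subw sw h2).
- apply: connect_trans (connect_subw sw h1) _.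
  rewrite connect_symw in c12.
  exact: connect_trans c12 (connect_subw sw h2).
Qed.

Definition ncomp w := #|[set comp w x | x : 'I_n]|.

Lemma compU1 w e x : ~~ connect (adj w) (e1 e) (e2 e) ->
  comp (e |: w) x = if connect (adj w) x (e1 e) || connect (adj w) x (e2 e)
                    then comp w (e1 e) :|: comp w (e2 e) else comp w x.
Proof.
move=> nab; set c := connect (adj w).
apply/finset.setP => z; rewrite mem_comp connectU1 -/c.
case: ifP => [/orP[]|/norP[nxa nxb]].
- move=> cxa; rewrite finset.in_setU !mem_comp -/c -[c x z]mem_comp (comp_eq cxa) mem_comp -/c cxa /=.
  by case: (c (e1 e) z); case: (c (e2 e) z); case: (c x (e2 e)); case: (c x (e1 e)).
- move=> cxb; rewrite finset.in_setU !mem_comp -/c -[c x z]mem_comp (comp_eq cxb) mem_comp -/c cxb /=.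
  by case: (c (e1 e) z); case: (c (e2 e) z); case: (c x (e2 e)); case: (c x (e1 e)).
- by rewrite mem_comp (negbTE nxa) (negbTE nxb) /= !orbF.
Qed.

Lemma ncompU1 w e : ~~ connect (adj w) (e1 e) (e2 e) ->
  (ncomp (e |: w)).+1 = ncomp w.
Proof.
move=> nab; set a := e1 e; set b := e2 e; set c := connect (adj w).
set A := comp w a; set B := comp w b.
set K := [set comp w x | x : 'I_n]; set K' := [set comp (e |: w) x | x : 'I_n].
have AK : A \in K by apply: imset_f.
have BK : B \in K by apply: imset_f.
have bB : b \in B by rewrite mem_comp connect0.
have aA : a \in A by rewrite mem_comp connect0.
have bnA : b \notin A by rewrite mem_comp.
have AB : B != A by apply/eqP => eAB; move: bnA; rewrite -eAB bB.
have cls : forall x, c x a -> comp w x = A by move=> x /comp_eq.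
have clsb : forall x, c x b -> comp w x = B by move=> x /comp_eq.
have eK' : K' = (A :|: B) |: (K :\ A :\ B).
  apply/finset.setP => X; rewrite in_setU1 !in_setD1; apply/imsetP/idP.
    case=> x _ ->; rewrite compU1 //; case: ifP => [_|/norP[nxa nxb]]; first by rewrite eqxx.
    apply/orP; right; rewrite imset_f // andbT; apply/andP; split; apply/eqP => h.
      by move: nxb; rewrite -(mem_comp w x (e2 e)) h bB.
    by move: nxa; rewrite -(mem_comp w x (e1 e)) h aA.
  case/orP => [/eqP->|/and3P[XB XA /imsetP[x _ Xx]]].
    by exists a => //; rewrite compU1 // connect0.
  exists x => //; rewrite compU1 //.
  case: ifP => // /orP[/cls|/clsb] h; by move: XA XB; rewrite Xx h eqxx.
rewrite /ncomp -/K -/K' eK' cardsU1 (cardsD1 A K) AK (cardsD1 B (K :\ A)).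
rewrite [B \in K :\ A]in_setD1 AB BK /= !in_setD1.
suff -> : (A :|: B \in K) = false by rewrite !andbF.
apply/negbTE/negP => /imsetP[x _ hx].
have : a \in comp w x by rewrite -hx finset.in_setU aA.
rewrite mem_comp => /cls hA; rewrite hA in hx.
have : b \in A :|: B by rewrite finset.in_setU bB orbT.
by rewrite hx (negbTE bnA).
Qed.

End Graph.

Section Graph2.
Variable n : nat.
Implicit Types (w t u : {set edge n}) (x y a b : 'I_n) (e : edge n).

Lemma comp0 x : comp (finset.set0 : {set edge n}) x = [set x].
Proof.
apply/finset.setP => y; rewrite mem_comp in_set1; apply/idP/idP; last by move/eqP->; exact: connect0.
move: y; apply: connect_ind'; first by rewrite eqxx.
by move=> y z _ /adjP[f]; rewrite finset.in_set0.
Qed.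

Lemma ncomp0 : ncomp (finset.set0 : {set edge n}) = n.
Proof.
rewrite /ncomp; under eq_imset do rewrite comp0.
by rewrite card_imset ?card_ord //; apply: set1_inj.
Qed.

Lemma forest_count u : [forall e in u, ~~ connect (adj (u :\ e)) (e1 e) (e2 e)] ->
  forall t, t \subset u -> ncomp t + #|t| = n.
Proof.
move=> /forall_inP hu t; move Hk : #|t| => k; elim: k t Hk => [|k IH] t Hk tu.
  by move: Hk => /eqP; rewrite cards_eq0 => /eqP ->; rewrite ncomp0 addn0.
have : 0 < #|t| by rewrite Hk.
rewrite card_gt0 => /set0Pn [e et].
have et' := setD1K et.
have nc : ~~ connect (adj (t :\ e)) (e1 e) (e2 e).
  apply: contra (hu e (fintype.subsetP tu e et)); apply: connect_subw.
  exact: setSD.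
have := ncompU1 nc; rewrite et' => hn.
have hk : #|t :\ e| = k by move: Hk; rewrite (cardsD1 e t) et add1n => -[].
have h2 := IH (t :\ e) hk (subset_trans (subD1set t e) tu).
by rewrite -hn in h2; rewrite addnS -addSn.
Qed.

Lemma tree_card u : is_tree u -> #|u| = n.-1.
Proof.
case/andP => /forallP hc hb.
have := forest_count hb (subxx u).
case: (posnP n) => [n0|npos].
  move=> h; have h0 : ncomp u + #|u| = 0 by rewrite h n0.
  have hu : #|u| = 0 by apply/eqP; rewrite -leqn0 -h0 leq_addl.
  by rewrite hu; clear -n0; rewrite n0.
suff -> : ncomp u = 1 by move=> h; apply/eqP; rewrite -(eqn_add2l 1) h add1n prednK.
rewrite /ncomp (_ : [set comp u x | x : 'I_n] = [set setT]) ?cards1 //.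
apply/setP => X; rewrite in_set1; apply/imsetP/eqP => [[x _ ->]|->].
  apply/setP => y; rewrite mem_comp in_setT; exact: (forallP (hc x)).
exists (Ordinal npos) => //; apply/setP => y; rewrite mem_comp in_setT.
by rewrite (forallP (hc _)).
Qed.

End Graph2.

Lemma connect_homo (T T' : finType) (e : rel T) (e' : rel T') (f : T -> T') :
  (forall x y, e x y -> e' (f x) (f y)) ->
  forall x y, connect e x y -> connect e' (f x) (f y).
Proof.
move=> hf x; apply: connect_ind'; first exact: connect0.
move=> y z cy eyz; apply: connect_trans cy _; apply: connect1; exact: hf.
Qed.

Lemma imsetD1_inj (aT rT : finType) (f : aT -> rT) (A : {set aT}) x :
  injective f -> f @: (A :\ x) = f @: A :\ f x.
Proof.
move=> fi; apply/setP => y; rewrite in_setD1; apply/imsetP/andP.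
  by case=> z; rewrite in_setD1 => /andP[zx zA] ->; rewrite (inj_eq fi) zx imset_f.
by case=> yfx /imsetP[z zA yz]; exists z => //; rewrite in_setD1 zA andbT; apply: contraNneq yfx => <-; rewrite yz.
Qed.

Definition ord_pair m (a b : 'I_m) := if (a < b)%N then (a, b) else (b, a).

Lemma ord_pairP m (a b : 'I_m) : a != b -> ((ord_pair a b).1 < (ord_pair a b).2)%N.
Proof.
move=> H; rewrite /ord_pair; case: (ltngtP a b) => //= h.
by rewrite (val_inj h) eqxx in H.
Qed.

Definition mkE m (a b : 'I_m) (H : a != b) : edge m := exist _ (ord_pair a b) (ord_pairP H).

Lemma ends_mkE m (a b : 'I_m) (H : a != b) x y :
  ends (mkE H) x y = ((a == x) && (b == y)) || ((b == x) && (a == y)).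
Proof.
rewrite /ends /e1 /e2 /= /ord_pair; case: ifP => _ /=;
by case: (a == x); case: (b == y); case: (b == x); case: (a == y).
Qed.

Lemma edge_ext m (f f' : edge m) : ends f' (e1 f) (e2 f) -> f' = f.
Proof.
case/orP => /andP[/eqP h1 /eqP h2].
  by apply: val_inj; move: h1 h2; rewrite /e1 /e2; case: (val f') => ? ? /= -> ->; case: (val f).
have := valP f; have := valP f'; rewrite -/(e1 f) -/(e2 f) -/(e1 f') -/(e2 f') h1 h2.
by move=> a b; have := ltn_trans a b; rewrite ltnn.
Qed.

Lemma ends_in m (f : edge m) : ends f (e1 f) (e2 f).
Proof. by rewrite /ends !eqxx. Qed.

Lemma connect_ends m (w : {set edge m}) f x y : ends f x y ->
  connect (adj w) (e1 f) (e2 f) = connect (adj w) x y.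
Proof. by case/ends_edge/orP => /andP[/eqP-> /eqP->] //; rewrite connect_symw. Qed.

Section Relabel.
Variables (n r : nat) (S : {set 'I_n}) (hS : #|S| = r) (i : 'I_n) (iS : i \in S).
Implicit Types (u : {set edge r}) (t : {set edge n}) (k : edge r) (x y : 'I_n).

Definition hh (k : 'I_r) : 'I_n := enum_val (cast_ord (esym hS) k).
Definition gg (a : 'I_n) : 'I_r := cast_ord hS (enum_rank_in iS a).

Lemma hhK (k : 'I_r) : gg (hh k) = k.
Proof. by apply: val_inj; rewrite /gg /hh /= enum_valK_in. Qed.

Lemma ggK (a : 'I_n) : a \in S -> hh (gg a) = a.
Proof. by move=> aS; rewrite /hh /gg cast_ordK enum_rankK_in. Qed.

Lemma hhS (k : 'I_r) : hh k \in S.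
Proof. exact: enum_valP. Qed.

Lemma hh_inj : injective hh.
Proof. exact: can_inj hhK. Qed.

Lemma hh_eq (k : 'I_r) (a : 'I_n) : a \in S -> (hh k == a) = (k == gg a).
Proof. by move=> aS; rewrite -{1}(ggK aS) (inj_eq hh_inj). Qed.

Lemma hneq (k : edge r) : hh (e1 k) != hh (e2 k).
Proof. by rewrite (inj_eq hh_inj); apply/eqP => h; have := valP k; rewrite -/(e1 k) -/(e2 k) h ltnn. Qed.

Definition EE (k : edge r) : edge n := mkE (hneq k).

Lemma ends_EE_S k x y : ends (EE k) x y -> (x \in S) && (y \in S).
Proof. by rewrite ends_mkE => /orP[] /andP[/eqP<- /eqP<-]; rewrite !hhS. Qed.

Lemma ends_EE k x y : x \in S -> y \in S -> ends (EE k) x y = ends k (gg x) (gg y).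
Proof.
move=> xS yS; rewrite ends_mkE !hh_eq // /ends.
by rewrite [X in _ || X]andbC.
Qed.

Lemma ends_EE_h k : ends (EE k) (hh (e1 k)) (hh (e2 k)).
Proof. by rewrite ends_EE ?hhS // !hhK ends_in. Qed.

Lemma EE_inj : injective EE.
Proof.
move=> k k' h; apply: edge_ext.
by have := ends_EE_h k'; rewrite -h ends_EE ?hhS // !hhK.
Qed.

Definition inS : {set edge n} := [set e | (e1 e \in S) && (e2 e \in S)].

Lemma inS_range e : e \in inS -> exists k, EE k = e.
Proof.
rewrite inE => /andP[h1 h2].
have ne : gg (e1 e) != gg (e2 e).
  apply/eqP => h; have := valP e; rewrite -/(e1 e) -/(e2 e).
  by rewrite -(ggK h1) -(ggK h2) h ltnn.
exists (mkE ne); apply: edge_ext; rewrite ends_EE // ends_mkE !eqxx //=.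
Qed.

Lemma adj_EE u x y : adj (EE @: u) x y =
  [&& x \in S, y \in S & adj u (gg x) (gg y)].
Proof.
apply/adjP/and3P.
  case=> f /imsetP[k ku ->] hk; have /andP[xS yS] := ends_EE_S hk.
  by split => //; apply/adjP; exists k => //; rewrite -ends_EE.
case=> xS yS /adjP[k ku hk]; exists (EE k); first exact: imset_f.
by rewrite ends_EE.
Qed.

Lemma TL u (a b : 'I_r) : connect (adj (EE @: u)) (hh a) (hh b) = connect (adj u) a b.
Proof.
apply/idP/idP => h.
  rewrite -(hhK a) -(hhK b); move: h; apply: connect_homo => x y.
  by rewrite adj_EE => /and3P[].
move: h; apply: connect_homo => x y hxy.
by rewrite adj_EE !hhS !hhK.
Qed.

Definition treeOn (t : {set edge n}) :=
  [&& t \subset inS, [forall x in S, forall y in S, connect (adj t) x y] &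
      [forall e in t, ~~ connect (adj (t :\ e)) (e1 e) (e2 e)]].

Lemma EE_inS u : EE @: u \subset inS.
Proof.
apply/subsetP => f /imsetP[k _ ->]; rewrite inE.
exact: (ends_EE_S (ends_in (EE k))).
Qed.

Lemma tree_transfer u : is_tree u = treeOn (EE @: u).
Proof.
rewrite /is_tree /treeOn EE_inS /=; congr andb.
  apply/forallP/forall_inP => [h x xS|h x].
    apply/forall_inP => y yS; rewrite -(ggK xS) -(ggK yS) TL.
    exact: (forallP (h _)).
  apply/forallP => y; rewrite -TL; exact: (forall_inP (h _ (hhS _))) _ (hhS _).
apply/forall_inP/forall_inP => [h f /imsetP[k ku ->]|h k ku].
  rewrite -imsetD1_inj; last exact: EE_inj.
  rewrite (connect_ends _ (ends_EE_h k)) TL; exact: h.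
have := h _ (imset_f EE ku).
by rewrite -imsetD1_inj ?(connect_ends _ (ends_EE_h k)) ?TL //; apply: EE_inj.
Qed.

Lemma EE_preim t : t \subset inS -> EE @: (EE @^-1: t) = t.
Proof.
move=> tS; apply/setP => f; apply/imsetP/idP.
  by case=> k; rewrite inE => kt ->.
move=> ft; have [k hk] := inS_range (subsetP tS f ft).
by exists k; rewrite // inE hk.
Qed.

Lemma card_treeOn : #|[set t | treeOn t]| = T r.
Proof.
have -> : [set t | treeOn t] = (fun u => EE @: u) @: [set u | is_tree u].
  apply/setP => t; rewrite inE; apply/idP/imsetP.
    move=> ht; exists (EE @^-1: t); last by rewrite EE_preim //; case/andP: ht.
    by rewrite inE tree_transfer EE_preim //; case/andP: ht.
  by case=> u; rewrite inE tree_transfer => h ->.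
by rewrite card_imset //; apply: imset_inj; apply: EE_inj.
Qed.

Lemma treeOn_card t : treeOn t -> #|t| = r.-1.
Proof.
move=> ht; have tS : t \subset inS by case/andP: ht.
rewrite -(EE_preim tS) card_imset; last exact: EE_inj.
apply: tree_card; by rewrite tree_transfer EE_preim.
Qed.

End Relabel.


Section Comb.
Variable n : nat.
Implicit Types (S : {set 'I_n}) (w t : {set edge n}) (x y : 'I_n) (f : edge n).

Definition cross S := [set f | (e1 f \in S) != (e2 f \in S)].
Definition touch S := [set f | (e1 f \in S) || (e2 f \in S)].
Definition phi S f : 'I_n * 'I_n := if e1 f \in S then (e1 f, e2 f) else (e2 f, e1 f).

Lemma phi_ends S f f' : phi S f = phi S f' -> ends f' (e1 f) (e2 f).
Proof.
rewrite /phi /ends; case: ifP; case: ifP => _ _ [-> ->]; rewrite !eqxx //= ?orbT //.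
Qed.

Lemma card_cross S : (#|S| * (n - #|S|) <= #|cross S|)%N.
Proof.
have -> : (n - #|S| = #|~: S|)%N by rewrite -{1}(card_ord n) -(cardsC S) addKn.
rewrite -cardsX; apply: leq_trans (leq_imset_card (phi S) _).
apply: subset_leq_card; apply/subsetP => -[x y]; rewrite inE /= in_setC => /andP[xS yS].
have xy : x != y by apply: contraNneq yS => <-.
apply/imsetP; exists (mkE xy).
  by rewrite inE /e1 /e2 /= /ord_pair; case: ifP => /=; rewrite xS (negbTE yS).
by rewrite /phi /e1 /e2 /= /ord_pair; case: (x < y)%N => /=; rewrite ?xS ?(negbTE yS).
Qed.

Lemma card_touch S : (#|touch S| <= #|S| * n)%N.
Proof.
rewrite -[X in (_ * X)%N]card_ord -cardsT -cardsX.
rewrite -(card_in_imset (f := phi S)); last first.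
  by move=> f f' _ _ /phi_ends /edge_ext ->.
apply: subset_leq_card; apply/subsetP => z /imsetP[f hf ->]; rewrite inE in hf.
rewrite /phi; case: (boolP (e1 f \in S)) => h; rewrite inE /= ?h ?in_setT //=.
by move: hf; rewrite (negbTE h) andbT.
Qed.

Lemma comp_closed w i y z : y \in comp w i -> adj w y z -> z \in comp w i.
Proof. by rewrite !mem_comp => h1 h2; apply: connect_trans h1 (connect1 h2). Qed.

Lemma comp_nocross w i : [disjoint w & cross (comp w i)].
Proof.
apply/pred0P => f /=; apply/negbTE/negP => /andP[fw]; rewrite inE.
have a12 := adj_edge fw; have a21 : adj w (e2 f) (e1 f) by rewrite adj_sym.
case: (boolP (e1 f \in comp w i)) => h1; case: (boolP (e2 f \in comp w i)) => h2 //=.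
  by move: h2; rewrite (comp_closed h1 a12).
by move: h1; rewrite (comp_closed h2 a21).
Qed.

Lemma spanning_tree w i : exists t, treeOn (comp w i) t && (t \subset w).
Proof.
pose P t := (t \subset w :&: inS (comp w i)) && [forall x in comp w i, connect (adj t) i x].
have P0 : P (w :&: inS (comp w i)).
  rewrite /P subxx /=.
  suff h : forall x, connect (adj w) i x ->
      (x \in comp w i) && connect (adj (w :&: inS (comp w i))) i x.
    by apply/forall_inP => x; rewrite mem_comp => /h /andP[].
  apply: connect_ind'; first by rewrite mem_comp !connect0.
  move=> y z /andP[yS cy] ayz; have zS : z \in comp w i by apply: comp_closed yS ayz.
  rewrite zS /=; apply: connect_trans cy (connect1 _).
  case/adjP: ayz => f fw hf; apply/adjP; exists f => //.
  rewrite in_setI fw inE; case/ends_edge/orP: hf => /andP[/eqP<- /eqP<-]; rewrite ?yS ?zS //.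
case: (arg_minnP (fun t => #|t|) P0) => t /andP[tw tc] tmin.
have tS : t \subset inS (comp w i) by apply: subset_trans tw (subsetIr _ _).
exists t; rewrite (subset_trans tw (subsetIl _ _)) andbT /treeOn tS /=.
apply/andP; split.
  apply/forall_inP => x xS; apply/forall_inP => y yS.
  have := forall_inP tc x xS; have := forall_inP tc y yS => cy cx.
  by apply: connect_trans cy; rewrite connect_symw.
apply/forall_inP => e et; apply/negP => ce.
have : P (t :\ e).
  rewrite /P (subset_trans (subD1set t e) tw) /=; apply/forall_inP => x xS.
  exact: connect_reroute ce (forall_inP tc x xS).
move/tmin; rewrite (cardsD1 e t) et add1n ltnn //.
Qed.


Lemma lower_claim S t w i : i \in S -> treeOn S t -> t \subset w ->
  [disjoint w & (inS S :\: t) :|: cross S] -> comp w i = S /\ w :&: inS S = t.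
Proof.
move=> iS /and3P[tS /forall_inP tc _] tw dw.
have nB : forall f, f \in w -> f \in (inS S :\: t) :|: cross S -> False.
  by move=> f fw fB; move/pred0P: dw => /(_ f) /=; rewrite fw fB.
split.
  apply/setP => x; apply/idP/idP.
    rewrite mem_comp; move: x; apply: connect_ind' => // y z yS /adjP[f fw hf].
    apply/negPn/negP => zS; apply: (nB f fw); rewrite in_setU; apply/orP; right.
    rewrite inE; case/ends_edge/orP: hf => /andP[/eqP<- /eqP<-]; rewrite ?yS ?(negbTE zS) //.
  move=> xS; rewrite mem_comp; apply: connect_subw tw _.
  exact: (forall_inP (tc i iS) x xS).
apply/setP => f; rewrite in_setI; apply/andP/idP => [[fw fS]|ft].
  apply/negPn/negP => nft; apply: (nB f fw); by rewrite in_setU in_setD nft fS.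
by rewrite (subsetP tw f ft) (subsetP tS f ft).
Qed.

Lemma card_Ssets i r : (0 < r)%N ->
  #|[set S : {set 'I_n} | (i \in S) && (#|S| == r)]| = 'C(n.-1, r.-1).
Proof.
move=> r0.
have -> : [set S : {set 'I_n} | (i \in S) && (#|S| == r)] =
    (fun A : {set 'I_n} => i |: A) @: [set A : {set 'I_n} | A \subset [set~ i] & #|A| == r.-1].
  apply/setP => S; rewrite inE; apply/andP/imsetP => [[iS /eqP hS]|[A]].
    exists (S :\ i); last by rewrite setD1K.
    rewrite inE; apply/andP; split.
      by apply/subsetP => x; rewrite !inE => /andP[].
    by rewrite -hS (cardsD1 i S) iS.
  rewrite inE => /andP[sA /eqP hA] ->; split; first by rewrite setU11.
  have iA : i \notin A by apply/negP => /(subsetP sA); rewrite !inE eqxx.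
  by rewrite cardsU1 iA hA add1n prednK.
rewrite card_in_imset; last first.
  move=> A B; rewrite !inE => /andP[sA _] /andP[sB _] h.
  have iA : i \notin A by apply/negP => /(subsetP sA); rewrite !inE eqxx.
  have iB : i \notin B by apply/negP => /(subsetP sB); rewrite !inE eqxx.
  by rewrite -(setU1K iA) h setU1K.
by rewrite cards_draws cardsC1 card_ord.
Qed.

End Comb.


Lemma ffact_le m k : (m ^_ k <= m ^ k)%N.
Proof.
rewrite ffact_prod -[X in (_ <= _ ^ X)%N](card_ord k) -prod_nat_const.
by apply: leq_prod => i _; apply: leq_subr.
Qed.

Lemma ffact_ge m k : ((m - k) ^ k <= m ^_ k)%N.
Proof.
rewrite ffact_prod -[X in (_ ^ X <= _)%N](card_ord k) -prod_nat_const.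
by apply: leq_prod => i _; apply: leq_sub2l; apply: ltnW.
Qed.

Lemma leq_expn m1 m2 k : (m1 <= m2)%N -> (m1 ^ k <= m2 ^ k)%N.
Proof. by move=> h; elim: k => // k IH; rewrite !expnS leq_mul. Qed.


Local Open Scope ring_scope.

Section Weight.
Variables (R : realType) (n : nat) (p : edge n -> R).

Lemma weightE w : weight p w = \prod_e (if e \in w then p e else 1 - p e).
Proof.
rewrite /weight [RHS](bigID (mem w)) /=; congr (_ * _).
  by apply: eq_big => [e|e ew]; rewrite ?inE ?ew.
by apply: eq_big => [e|e]; rewrite ?in_setC // => /negbTE ->.
Qed.

Lemma sum_weight (A B : {set edge n}) : [disjoint A & B] ->
  \sum_(w : {set edge n} | (A \subset w) && [disjoint w & B]) weight p w =
  (\prod_(e in A) p e) * \prod_(e in B) (1 - p e).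
Proof.
move=> dAB.
pose F e := if e \in B then 0 else p e.
pose G e := if e \in A then 0 else 1 - p e.
have hd := bigA_distr 1 (@GRing.add R) F G.
have eq1 : \prod_e (F e + G e) = (\prod_(e in A) p e) * \prod_(e in B) (1 - p e).
  rewrite (bigID (mem A)) /=; congr (_ * _).
    apply: eq_bigr => e eA; rewrite /F /G eA.
    by rewrite (disjointFr dAB eA) addr0.
  rewrite [LHS]big_mkcond [RHS]big_mkcond /=; apply: eq_bigr => e _.
  rewrite /F /G; case: (boolP (e \in A)) => eA /=; first by rewrite (disjointFr dAB eA).
  case: ifP => _; first by rewrite add0r.
  by rewrite addrC subrK.
rewrite -eq1 hd [LHS]big_mkcond /=; apply: eq_bigr => w _.
case: ifP => [/andP[sAw dwB]|hc].
  rewrite weightE; apply: eq_bigr => e _; rewrite /F /G.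
  case: ifP => ew.
    by rewrite (disjointFr dwB ew).
  by case: ifP => // eA; move: ew; rewrite (subsetP sAw e eA).
apply/esym/eqP; rewrite prodf_seq_eq0; apply/hasP.
move/negbT: hc; rewrite negb_and => /orP[/subsetPn[e eA ew]|/pred0Pn[e /andP[ew eB]]].
  by exists e; rewrite ?mem_index_enum //= (negbTE ew) /G eA.
exists e; first exact: mem_index_enum.
have ew' : e \in w := ew; have eB' : e \in B := eB.
by rewrite /= ew' /F eB'.
Qed.

End Weight.


Lemma le_sum_term (R : realType) (I : finType) (P : pred I) (F : I -> R) x :
  P x -> (forall y, P y -> 0 <= F y) -> F x <= \sum_(y | P y) F y.
Proof.
move=> Px F0; rewrite (bigD1 x) //= lerDl; apply: sumr_ge0 => y /andP[Py _]; exact: F0.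
Qed.

Lemma le_sum_sub (R : realType) (I : finType) (P : pred I) (F : I -> R) :
  (forall y, 0 <= F y) -> \sum_(y | P y) F y <= \sum_y F y.
Proof.
move=> F0; rewrite [X in _ <= X](bigID P) /= lerDl; exact: sumr_ge0.
Qed.

Section Bounds.
Variables (R : realType) (n : nat) (p : edge n -> R) (a b : R) (i : 'I_n) (r : nat).
Hypotheses (hp : forall e, a <= p e <= b) (hp1 : forall e, p e <= 1)
  (ha : 0 <= a) (hab : a <= b) (hb1 : b <= 1) (hr : (0 < r)%N).

Let Ss := [set S : {set 'I_n} | (i \in S) && (#|S| == r)].
Let Tr (S : {set 'I_n}) := [set t | treeOn S t].

Lemma p_ge0 e : 0 <= p e.
Proof. by case/andP: (hp e) => h _; apply: le_trans h. Qed.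

Lemma weight_ge0 (w : {set edge n}) : 0 <= weight p w.
Proof.
rewrite /weight; apply: mulr_ge0; apply: prodr_ge0 => e _; first exact: p_ge0.
by rewrite subr_ge0.
Qed.

Lemma prod_p_le (t : {set edge n}) : #|t| = r.-1 -> \prod_(e in t) p e <= b ^+ r.-1.
Proof.
move=> ht; rewrite -ht -prodr_const; apply: ler_prod => e _.
by rewrite p_ge0; case/andP: (hp e).
Qed.

Lemma prod_p_ge (t : {set edge n}) : #|t| = r.-1 -> a ^+ r.-1 <= \prod_(e in t) p e.
Proof.
move=> ht; rewrite -ht -prodr_const; apply: ler_prod => e _.
by rewrite ha; case/andP: (hp e).
Qed.

Lemma sumSs_const (c : R) :
  \sum_(S in Ss) \sum_(t in Tr S) c = 'C(n.-1, r.-1)%:R * (T r)%:R * c.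
Proof.
rewrite (eq_bigr (fun _ => c *+ T r)); last first.
  move=> S; rewrite inE => /andP[iS /eqP hS].
  by rewrite sumr_const /Tr (card_treeOn hS iS).
by rewrite sumr_const card_Ssets // -mulrnA -[c *+ _]mulr_natl mulnC natrM.
Qed.

Lemma upper_bound :
  prob_comp_size p i r <= 'C(n.-1, r.-1)%:R * (T r)%:R * (b ^+ r.-1 * (1 - a) ^+ (r * (n - r))).
Proof.
pose X (S : {set 'I_n}) (t w : {set edge n}) := if (t \subset w) && [disjoint w & cross S] then weight p w else 0.
have X0 : forall S t w, 0 <= X S t w by move=> S t w; rewrite /X; case: ifP => // _; exact: weight_ge0.
apply: (@le_trans _ _ (\sum_w \sum_(S in Ss) \sum_(t in Tr S) X S t w)).
  rewrite /prob_comp_size big_mkcond /=; apply: ler_sum => w _.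
  case: ifP => hw; last by apply: sumr_ge0 => S _; apply: sumr_ge0.
  have [t0 /andP[ht0 t0w]] := spanning_tree w i.
  have S0 : comp w i \in Ss by rewrite inE hw mem_comp connect0.
  apply: le_trans (le_sum_term S0 _); last by move=> S _; apply: sumr_ge0.
  have t0T : t0 \in Tr (comp w i) by rewrite inE.
  apply: le_trans (le_sum_term t0T _); last by move=> t _.
  by rewrite /X t0w comp_nocross.
rewrite exchange_big /= -sumSs_const; apply: ler_sum => S; rewrite inE => /andP[iS /eqP hS].
rewrite exchange_big /=; apply: ler_sum => t; rewrite inE => ht.
have tS : t \subset inS S by case/and3P: ht.
have dt : [disjoint t & cross S].
  apply/pred0P => f /=; apply/negbTE/negP => /andP[/(subsetP tS)]; rewrite !inE => /andP[-> ->].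
  by [].
rewrite /X -big_mkcond /= sum_weight //.
apply: ler_pM; first by apply: prodr_ge0 => e _; exact: p_ge0.
- by apply: prodr_ge0 => e _; rewrite subr_ge0.
- exact/prod_p_le/(treeOn_card hS iS).
apply: le_trans (_ : (1 - a) ^+ #|cross S| <= _).
  rewrite -prodr_const; apply: ler_prod => e _; rewrite subr_ge0 hp1 /=.
  by rewrite lerB //; case/andP: (hp e).
apply: ler_wiXn2l.
- by rewrite subr_ge0; apply: le_trans hab hb1.
- by rewrite lerBlDr lerDl.
by rewrite -hS card_cross.
Qed.


Lemma lower_bound :
  'C(n.-1, r.-1)%:R * (T r)%:R * (a ^+ r.-1 * (1 - b) ^+ (r * n)) <= prob_comp_size p i r.
Proof.
pose Bs (S : {set 'I_n}) (t : {set edge n}) := (inS S :\: t) :|: cross S.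
pose Y (S : {set 'I_n}) (t w : {set edge n}) :=
  if (t \subset w) && [disjoint w & Bs S t] then weight p w else 0.
have Y0 : forall S t w, 0 <= Y S t w by move=> S t w; rewrite /Y; case: ifP => // _; exact: weight_ge0.
apply: (@le_trans _ _ (\sum_(S in Ss) \sum_(t in Tr S) \sum_w Y S t w)).
  rewrite -sumSs_const; apply: ler_sum => S; rewrite inE => /andP[iS /eqP hS].
  apply: ler_sum => t; rewrite inE => ht.
  have tS : t \subset inS S by case/and3P: ht.
  have dt : [disjoint t & Bs S t].
    apply/pred0P => f /=; apply/negbTE/negP => /andP[ft].
    rewrite !inE ft /=; move: (subsetP tS f ft); rewrite inE => /andP[-> ->].
    by [].
  rewrite /Y -big_mkcond /= sum_weight //.
  apply: ler_pM.
  - by apply: exprn_ge0.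
  - by apply: exprn_ge0; rewrite subr_ge0.
  - exact/prod_p_ge/(treeOn_card hS iS).
  apply: le_trans (_ : (1 - b) ^+ #|Bs S t| <= _).
    apply: ler_wiXn2l.
    - by rewrite subr_ge0.
    - by rewrite lerBlDr lerDl (le_trans ha hab).
    rewrite -hS; apply: leq_trans (card_touch S); apply: subset_leq_card.
    apply/subsetP => f; rewrite !inE => /orP[/andP[_ /andP[-> //]]|].
    by case: (e1 f \in S); case: (e2 f \in S).
  rewrite -prodr_const; apply: ler_prod => e _; rewrite subr_ge0 hb1 /=.
  by rewrite lerB //; case/andP: (hp e).
under eq_bigr do rewrite exchange_big /=.
rewrite exchange_big /= /prob_comp_size [X in _ <= X]big_mkcond /=; apply: ler_sum => w _.
set c := if _ then _ else _.
have c0 : 0 <= c by rewrite /c; case: ifP => // _; exact: weight_ge0.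
pose Z (S : {set 'I_n}) (t : {set edge n}) :=
  if S == comp w i then (if t == w :&: inS S then c else 0) else 0.
have YZ : forall S t, S \in Ss -> t \in Tr S -> Y S t w <= Z S t.
  move=> S t; rewrite !inE => /andP[iS /eqP hS] ht.
  rewrite /Y; case: ifP => [/andP[tw dw]|]; last by rewrite /Z; case: ifP => //; case: ifP.
  have [e1 e2] := lower_claim iS ht tw dw.
  by rewrite /Z e1 eqxx e2 eqxx /c e1 hS eqxx.
apply: (@le_trans _ _ (\sum_(S in Ss) \sum_(t in Tr S) Z S t)).
  by apply: ler_sum => S SS; apply: ler_sum => t tT; apply: YZ.
have Z0 : forall S t, 0 <= Z S t by move=> S t; rewrite /Z; case: ifP => //; case: ifP.
apply: le_trans (le_sum_sub _ _) _ => [S|]; first by apply: sumr_ge0.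
apply: (@le_trans _ _ (\sum_S \sum_t Z S t)).
  by apply: ler_sum => S _; apply: le_sum_sub.
rewrite (bigD1 (comp w i)) //= [X in _ + X]big1 ?addr0; last first.
  by move=> S /negbTE hS; apply: big1 => t _; rewrite /Z hS.
rewrite (bigD1 (w :&: inS (comp w i))) //= [X in _ + X]big1 ?addr0; last first.
  by move=> t /negbTE ht; rewrite /Z eqxx ht.
by rewrite /Z !eqxx.
Qed.

End Bounds.




Section Real.
Variable R : realType.
Implicit Types (x y z : R).

Lemma powle x y k : 0 <= x -> x <= y -> x ^+ k <= y ^+ k.
Proof.
move=> x0 xy; elim: k => [|k IH]; first by rewrite !expr0.
rewrite !exprS; apply: ler_pM => //; exact: exprn_ge0.
Qed.

Lemma one_sub_le x : 0 <= 1 - x -> (1 - x) ^+ 0 <= 1. Proof. by rewrite expr0. Qed.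

Lemma exp_pow x k : expR x ^+ k = expR (k%:R * x).
Proof. by rewrite expRM_natl. Qed.

Lemma sub_le_exp x : 1 - x <= expR (- x).
Proof. by have := expR_ge1Dx (- x). Qed.

Lemma exp_le_sub x : 0 <= x -> x <= 1/2 -> expR (- (x + 2 * x ^+ 2)) <= 1 - x.
Proof.
move=> x0 x1.
have hx : 0 < 1 - x by lra.
set y := x / (1 - x).
have hy : 1 + y = (1 - x)^-1 by rewrite /y; field; lra.
have h1 := expR_ge1Dx y; rewrite hy in h1.
have hyle : y <= x + 2 * x ^+ 2.
  rewrite /y ler_pdivrMr //.
  have : 0 <= x * (x * (1 - 2 * x)) by apply: mulr_ge0 => //; apply: mulr_ge0 => //; lra.
  move=> h; rewrite expr2; lra.
apply: le_trans (_ : expR (- y) <= _); first by rewrite ler_expR; lra.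
have ey : expR (- y) * expR y = 1 by rewrite -expRD addNr expR0.
have e0 := expR_gt0 (- y).
have : expR (- y) * (1 - x)^-1 <= expR (- y) * expR y by apply: ler_wpM2l => //; exact: ltW.
rewrite ey => h2.
have -> : expR (- y) = expR (- y) * (1 - x)^-1 * (1 - x) by field; lra.
by rewrite -[X in _ <= X]mul1r; apply: ler_wpM2r => //; lra.
Qed.


Lemma expr_lnC (C : R) (k : nat) : 0 < C -> expR (k%:R * ln C) = C ^+ k.
Proof. by move=> C0; rewrite expRM_natl lnK // posrE. Qed.

Lemma upper_real (C al eps om N rr Kc Tn kf : R) (k m : nat) :
  0 < C -> 0 <= al -> al <= C -> 0 < N -> rr = (k.+1)%:R -> rr <= eps * N ->
  al / C + al <= om -> 0 < kf -> 0 <= Kc -> Kc * kf <= N ^+ k -> 0 <= Tn ->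
  m%:R = rr * (N - rr) -> (C - al) / N <= 1 -> 0 <= eps ->
  Kc * Tn * (((C + al) / N) ^+ k * (1 - (C - al) / N) ^+ m)
  <= Tn * expR (- rr) / (C * kf) * expR (- (delta C - C * eps - om) * rr).
Proof.
move=> C0 al0 alC N0 hrr hrN hom kf0 K0 hK T0 hm ha1 eps0.
have hkr : k%:R + 1 = rr by rewrite hrr -natr1.
have k0 : 0 <= k%:R :> R by apply: ler0n.
have rr1 : 1 <= rr by lra.
have hA : (1 - (C - al) / N) ^+ m <= expR (- ((C - al) * (1 - eps) * rr)).
  apply: le_trans (powle m _ (sub_le_exp _)) _; first lra.
  rewrite exp_pow ler_expR hm.
  have h1 : 1 - eps <= (N - rr) / N by rewrite ler_pdivlMr //; rewrite mulrBl mul1r; lra.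
  have -> : rr * (N - rr) * - ((C - al) / N) = - ((C - al) * rr * ((N - rr) / N)) by field; lra.
  rewrite lerN2 (_ : (C - al) * (1 - eps) * rr = (C - al) * rr * (1 - eps)); last by ring.
  apply: ler_wpM2l => //; apply: mulr_ge0; lra.
have hB : (C + al) ^+ k <= C ^+ k * expR (k%:R * (al / C)).
  rewrite -exp_pow -exprMn; apply: powle; first lra.
  have -> : C + al = C * (1 + al / C) by field; lra.
  apply: ler_wpM2l; first lra.
  exact: expR_ge1Dx.
have hK' : Kc <= N ^+ k / kf by rewrite ler_pdivlMr.
have Nk : 0 < N ^+ k by apply: exprn_gt0.
have step1 : Kc * Tn * (((C + al) / N) ^+ k * (1 - (C - al) / N) ^+ m) <=
    N ^+ k / kf * Tn * (C ^+ k * expR (k%:R * (al / C)) / N ^+ k *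
      expR (- ((C - al) * (1 - eps) * rr))).
  rewrite expr_div_n; apply: ler_pM.
  - exact: mulr_ge0.
  - apply: mulr_ge0; first by apply: divr_ge0; [apply: exprn_ge0; lra|exact: ltW].
    apply: exprn_ge0; lra.
  - exact: ler_wpM2r.
  apply: ler_pM => //.
  - by apply: divr_ge0; [apply: exprn_ge0; lra|exact: ltW].
  - apply: exprn_ge0; lra.
  by apply: ler_wpM2r; [rewrite invr_ge0; exact: ltW|].
apply: le_trans step1 _.
have -> : N ^+ k / kf * Tn * (C ^+ k * expR (k%:R * (al / C)) / N ^+ k *
      expR (- ((C - al) * (1 - eps) * rr))) =
    Tn * C ^+ k / kf * expR (k%:R * (al / C) - (C - al) * (1 - eps) * rr).
  rewrite expRD; field; apply/andP; split; lra.
have -> : Tn * expR (- rr) / (C * kf) * expR (- (delta C - C * eps - om) * rr) =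
    Tn * C ^+ k / kf * expR (- C * rr + C * eps * rr + om * rr).
  have -> : expR (- (delta C - C * eps - om) * rr) =
      expR ((k%:R + 1) * ln C) * expR (- C * rr + C * eps * rr + om * rr) * expR rr.
    rewrite -!expRD; congr expR; rewrite /delta hkr; ring.
  rewrite natr1 expr_lnC // exprS.
  have er := expR_gt0 rr.
  rewrite expRN; field; rewrite ?(andbT, andTb); apply/and3P; split; lra.
apply: ler_wpM2l.
  by apply: divr_ge0; [apply: mulr_ge0 => //; apply: exprn_ge0; lra|exact: ltW].
rewrite ler_expR.
have alC0 : 0 <= al / C by apply: divr_ge0; lra.
have h1 : 0 <= (rr - k%:R) * (al / C) by apply: mulr_ge0; lra.
have h2 : 0 <= al * eps * rr by apply: mulr_ge0; [apply: mulr_ge0|]; lra.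
have h3 : 0 <= (om - (al / C + al)) * rr by apply: mulr_ge0; lra.
have -> : - ((C - al) * (1 - eps) * rr) = - C * rr + C * eps * rr + al * (1 - eps) * rr by ring.
lra.
Qed.


Lemma lower_real (C al eps om N rr Kc Tn kf : R) (k m : nat) :
  0 < C -> 0 <= al -> al <= C / 2 -> 0 < N -> rr = (k.+1)%:R -> rr <= eps * N ->
  0 <= eps -> eps < 1 -> 0 < om -> (C + al) / N <= 1 / 2 ->
  2 * (al / C) + al + 2 * ((C + al) / N) * (C + al) <= om / 3 ->
  0 < kf -> (N - rr) ^+ k <= Kc * kf -> 0 <= Tn -> m%:R = rr * N ->
  1 / (C * (1 - eps)) * (Tn * expR (- rr) / kf)
    * expR (- (delta C - ln (1 - eps) + om) * rr) * expR (- (2 * eps) + 2 * om / 3)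
  <= Kc * Tn * (((C - al) / N) ^+ k * (1 - (C + al) / N) ^+ m).
Proof.
move=> C0 al0 alC N0 hrr hrN eps0 eps1 om0 hb hsmall kf0 hK T0 hm.
have hkr : k%:R + 1 = rr by rewrite hrr -natr1.
have k0 : 0 <= k%:R :> R by apply: ler0n.
have rr1 : 1 <= rr by lra.
set x := al / C; set b := (C + al) / N.
have x0 : 0 <= x by apply: divr_ge0; lra.
have x1 : x <= 1 / 2 by rewrite /x ler_pdivrMr //; lra.
have b0 : 0 <= b by apply: divr_ge0; lra.
have hNb : N * b = C + al by rewrite /b; field; lra.
have hCa : C - al = C * (1 - x) by rewrite /x; field; lra.
have hA : C ^+ k * expR (- (k%:R * (x + 2 * x ^+ 2))) <= (C - al) ^+ k.
  rewrite hCa [(C * _) ^+ _]exprMn; apply: ler_wpM2l; first by apply: exprn_ge0; lra.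
  rewrite -mulrN -exp_pow; apply: powle; first exact: expR_ge0.
  exact: exp_le_sub.
have hB : expR (- (rr * (C + al) * (1 + 2 * b))) <= (1 - b) ^+ m.
  apply: le_trans (powle m _ (exp_le_sub b0 hb)); last exact: expR_ge0.
  rewrite exp_pow ler_expR hm -hNb; rewrite le_eqVlt; apply/orP; left; apply/eqP; rewrite /b; field; lra.
have hN1 : 0 <= N * (1 - eps) by apply: mulr_ge0; lra.
have hK' : (N * (1 - eps)) ^+ k / kf <= Kc.
  rewrite ler_pdivrMr //; apply: le_trans hK; apply: powle => //.
  rewrite mulrBr mulr1 [N * eps]mulrC; lra.
have Nk : 0 < N ^+ k by apply: exprn_gt0.
have step1 : (N * (1 - eps)) ^+ k / kf * Tn * (C ^+ k * expR (- (k%:R * (x + 2 * x ^+ 2))) / N ^+ k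
     * expR (- (rr * (C + al) * (1 + 2 * b)))) <=
    Kc * Tn * (((C - al) / N) ^+ k * (1 - b) ^+ m).
  rewrite [((C - al) / N) ^+ k]expr_div_n; apply: ler_pM.
  - apply: mulr_ge0 => //; apply: divr_ge0; [exact: exprn_ge0|exact: ltW].
  - apply: mulr_ge0; last exact: expR_ge0.
    apply: divr_ge0; last exact: ltW Nk.
    by apply: mulr_ge0; [apply: exprn_ge0; lra|exact: expR_ge0].
  - exact: ler_wpM2r.
  apply: ler_pM => //.
  - apply: divr_ge0; last exact: ltW Nk.
    by apply: mulr_ge0; [apply: exprn_ge0; lra|exact: expR_ge0].
  - by apply: ler_wpM2r; [rewrite invr_ge0; exact: ltW Nk|].
apply: le_trans step1.
have -> : (N * (1 - eps)) ^+ k / kf * Tn * (C ^+ k * expR (- (k%:R * (x + 2 * x ^+ 2))) / N ^+ k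
     * expR (- (rr * (C + al) * (1 + 2 * b)))) =
    Tn * (1 - eps) ^+ k * C ^+ k / kf *
      expR (- (k%:R * (x + 2 * x ^+ 2)) - rr * (C + al) * (1 + 2 * b)).
  rewrite expRD exprMn; field; apply/andP; split; lra.
have -> : 1 / (C * (1 - eps)) * (Tn * expR (- rr) / kf)
    * expR (- (delta C - ln (1 - eps) + om) * rr) * expR (- (2 * eps) + 2 * om / 3) =
    Tn * (1 - eps) ^+ k * C ^+ k / kf * expR (- C * rr - om * rr - 2 * eps + 2 * om / 3).
  have -> : expR (- (delta C - ln (1 - eps) + om) * rr) =
      expR ((k%:R + 1) * ln C) * expR ((k%:R + 1) * ln (1 - eps)) *
      expR (- C * rr - om * rr) * expR rr.
    rewrite -!expRD; congr expR; rewrite /delta hkr; ring.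
  rewrite natr1 expr_lnC // expr_lnC; last lra.
  rewrite !exprS.
  have er := expR_gt0 rr.
  have -> : expR (- C * rr - om * rr - 2 * eps + 2 * om / 3) =
      expR (- C * rr - om * rr) * expR (- (2 * eps) + 2 * om / 3).
    by rewrite -expRD; congr expR; ring.
  rewrite expRN; field.
  by rewrite ?(andbT, andTb); apply/and4P; split; lra.
apply: ler_wpM2l.
  apply: divr_ge0; last exact: ltW.
  by apply: mulr_ge0; [apply: mulr_ge0 => //|]; apply: exprn_ge0; lra.
rewrite ler_expR.
have h1 : 0 <= k%:R * (x * (1 - 2 * x)) by apply: mulr_ge0 => //; apply: mulr_ge0; lra.
have h2 : 0 <= (rr - k%:R) * (2 * x) by apply: mulr_ge0; lra.
have h3 : 0 <= rr * (om / 3 - (2 * x + al + 2 * b * (C + al))) by apply: mulr_ge0; rewrite /x /b; lra.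
have h4 : 0 <= (rr - 1) * om by apply: mulr_ge0; lra.
rewrite expr2; lra.
Qed.

End Real.


End Aux.
Import Aux.
Unset Implicit Arguments. Set Strict Implicit. Set Printing Implicit Defensive.
Local Open Scope classical_set_scope.
Local Open Scope ring_scope.

Theorem lemma1 (R : realType) (C : R) (alpha : nat -> R)
  (p : forall n : nat, edge n -> R)
  (hC : 0 < C) (hC1 : C != 1)
  (halpha0 : forall n, 0 <= alpha n)
  (halpha : alpha @ \oo --> (0 : R))
  (hp01 : forall n (e : edge n), 0 <= p n e <= 1)
  (hp : forall n (e : edge n),
     (C - alpha n) / n%:R <= p n e <= (C + alpha n) / n%:R)
  (eps omega : R) (heps : 0 < eps < 1) (homega : 0 < omega)
  (hdelta0 : 0 < delta C - C * eps - omega) :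
  exists N : nat, (0 < N)%N /\
  forall n : nat, (N <= n)%N -> forall (i : 'I_n) (r : nat),
    (1 <= r)%N -> r%:R <= eps * n%:R ->
    prob_comp_size (p n) i r
      <= (T r)%:R * expR (- r%:R) / (C * (r.-1)`!%:R)
         * expR (- (delta C - C * eps - omega) * r%:R)
    /\
    1 / (C * (1 - eps)) * ((T r)%:R * expR (- r%:R) / (r.-1)`!%:R)
      * expR (- (delta C - ln (1 - eps) + omega) * r%:R)
      * expR (- (2 * eps) + 2 * omega / 3)
      <= prob_comp_size (p n) i r.
Proof.
case/andP: heps => eps0 eps1.
set A0 := Num.min (C / 2) (omega / (6 * (2 / C + 1))).
have hC2 : 0 < 2 / C + 1 by have := divr_gt0 (ltr0Sn R 1) hC; lra.
have A0pos : 0 < A0.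
  rewrite /A0 lt_min; apply/andP; split; first lra.
  by apply: divr_gt0 => //; lra.
have [N1 HN1] : exists N1, forall n, (N1 <= n)%N -> alpha n <= A0.
  move: halpha => /cvgrPdist_le /(_ A0 A0pos) [N1 _ HN1].
  exists N1 => n hn; have := HN1 n hn; rewrite /= sub0r normrN => h.
  by apply: le_trans h; exact: ler_norm.
set M := 27 * C ^+ 2 / omega + 3 * C.
have M0 : 0 <= M.
  rewrite /M; apply: addr_ge0; last lra.
  by apply: divr_ge0; [apply: mulr_ge0; [lra|apply: exprn_ge0; lra]|lra].
set N2 := Num.Def.archi_bound M.
have hN2 : M < N2%:R := archi_boundP M0.
exists (maxn 1 (maxn N1 N2)); split; first by rewrite leq_max.
move=> n; rewrite !geq_max => /and3P[n1 nN1 nN2] i r r1 hrn.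
set al := alpha n; set Nr := n%:R : R.
have al0 : 0 <= al := halpha0 n.
have alA : al <= A0 := HN1 n nN1.
have alC : al <= C / 2 by apply: le_trans alA _; rewrite /A0 ge_min lexx.
have alom : al * (2 / C + 1) <= omega / 6.
  have : al <= omega / (6 * (2 / C + 1)) by apply: le_trans alA _; rewrite /A0 ge_min lexx orbT.
  rewrite ler_pdivlMr; last lra.
  move=> h; rewrite ler_pdivlMr; last lra; lra.
have Nr0 : 0 < Nr by rewrite /Nr ltr0n.
have MN : M <= Nr by apply: le_trans (ltW hN2) _; rewrite /Nr ler_nat.
have hb : (C + al) / Nr <= 1 / 2.
  rewrite ler_pdivrMr //.
  have : 3 * C <= M by rewrite /M lerDr; apply: divr_ge0; [apply: mulr_ge0; [lra|apply: exprn_ge0; lra]|lra].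
  lra.
have hsmall : 2 * (al / C) + al + 2 * ((C + al) / Nr) * (C + al) <= omega / 3.
  have e1 : 2 * (al / C) + al = al * (2 / C + 1) by field; lra.
  have e2 : 2 * ((C + al) / Nr) * (C + al) <= omega / 6.
    have hCa : 0 <= C + al by lra.
    have hCa' : (C + al) ^+ 2 <= 9 / 4 * C ^+ 2.
      have h := mulr_ge0 (_ : 0 <= C / 2 - al) (_ : 0 <= 5 / 2 * C + al).
      by rewrite !expr2; move: h; rewrite /=; move/(_ _ _)=> h; lra.
    have : 27 * C ^+ 2 / omega <= Nr.
      by apply: le_trans MN; rewrite /M lerDl; lra.
    rewrite ler_pdivrMr // => hh.
    have -> : 2 * ((C + al) / Nr) * (C + al) = 2 * (C + al) ^+ 2 / Nr by rewrite expr2; field; lra.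
    rewrite ler_pdivrMr //.
    have : 0 <= omega * Nr by apply: mulr_ge0; lra.
    have : 0 <= C ^+ 2 by apply: exprn_ge0; lra.
    nra.
  rewrite e1; lra.
have rpos : (0 < r)%N by [].
have rr_le : r%:R <= Nr.
  apply: le_trans hrn _; rewrite -[X in _ <= X]mul1r; apply: ler_wpM2r; lra.
have rn : (r <= n)%N by rewrite -(ler_nat R).
have hk : r = (r.-1).+1 by rewrite prednK.
have hp' : forall e, (C - al) / Nr <= p n e <= (C + al) / Nr by move=> e; exact: hp n e.
have hp1 : forall e, p n e <= 1 by move=> e; case/andP: (hp01 n e).
have ha : 0 <= (C - al) / Nr by apply: divr_ge0; lra.
have hab : (C - al) / Nr <= (C + al) / Nr by apply: ler_wpM2r; [rewrite invr_ge0; lra|lra].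
have hb1 : (C + al) / Nr <= 1 by lra.
have kf0 : 0 < (r.-1)`!%:R :> R by rewrite ltr0n fact_gt0.
have hKnat := bin_ffact n.-1 r.-1.
split.
  apply: le_trans (upper_bound i hp' hp1 ha hab hb1 rpos) _.
  apply: upper_real => //.
  - lra.
  - by rewrite -hk.
  - have h : 0 <= al / C by apply: divr_ge0; lra.
    have e : al * (2 / C + 1) = 2 * (al / C) + al by field; lra.
    rewrite e in alom; lra.
  - rewrite -natrM hKnat /Nr -natrX ler_nat; apply: leq_trans (ffact_le _ _) _.
    by apply: leq_expn; apply: leq_pred.
  - by rewrite natrM natrB.
  - lra.
  - lra.
apply: le_trans (lower_bound i hp' hp1 ha hab hb1 rpos).
apply: lower_real => //.
- by rewrite -hk.
- lra.
- rewrite /Nr -natrB // -natrX -natrM hKnat ler_nat.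
  have := ffact_ge n.-1 r.-1.
  have e : (n.-1 - r.-1 = n - r)%N by clear -r1 rn; lia.
  by rewrite e.
- by rewrite natrM.
Qed.
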